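(* Let $n_1\geq n_2\geq 2$ be integers and let $\delta=1$ if $n_1$ is even and $n_2$ is odd, and $\delta=0$ otherwise. Define $f:[n_1]\times[n_2]\to[n_1n_2]$ by $$f(i,j)=\begin{cases}(i-1)n_2+j & i \text{ odd},\ j\text{ odd},\\ (i-1)n_2+(n_2+1-j) & i\text{ even},\ j\text{ even},\\ (n_1-i)n_2+j+\delta & i\text{ odd},\ j\text{ even},\\ (n_1-i)n_2+(n_2+1-j+\delta) & i\text{ even},\ j\text{ odd}.\end{cases}$$ Then $f$ is a $Q_2$-magic vertex labeling of $\textsc{Grid}(n_1,n_2)$ with $Q_2$-magic sum $2(n_1n_2+1)$ if $n_1$ is odd or $n_2$ is even, and $2(n_1n_2+2)$ if $n_1$ is even and $n_2$ is odd.
   Context: $[k]=\{1,\ldots,k\}$. $\textsc{Grid}(n_1,n_2)$ is the graph with vertex set $[n_1]\times[n_2]$ in which $(i,j)$ and $(i',j')$ are adjacent iff $|i-i'|+|j-j'|=1$. $Q_2$ is the 4-cycle $\textsc{Grid}(2,2)$. A bijection $f:V\to\{1,\ldots,|V|\}$ on the vertex set of a graph $G=(V,E)$ is an $H$-magic vertex labeling if there is a constant $c$ (the $H$-magic sum) with $\sum_{v\in V(H')}f(v)=c$ for every subgraph $H'\subseteq G$ isomorphic to $H$. *)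

(* Defs.v *)
From mathcomp Require Import all_boot.
Set Implicit Arguments. Unset Strict Implicit. Unset Printing Implicit Defensive.

(* Vertices of Grid(n1,n2): pairs (a,b) : 'I_n1 * 'I_n2, standing for (a+1, b+1)
   in [n1] x [n2]. *)
Definition distn (m n : nat) : nat := (m - n) + (n - m).

Definition grid_adj (n1 n2 : nat) : rel ('I_n1 * 'I_n2) :=
  fun u v => distn u.1 v.1 + distn u.2 v.2 == 1.

Definition Q2_adj : rel ('I_2 * 'I_2) := @grid_adj 2 2.

(* g : VH -> V exhibits a subgraph of (V,e) isomorphic to (VH,eH):
   the subgraph has vertex set g(VH) and edge set g(E(H)). *)
Definition subgraph_copy (VH V : finType) (eH : rel VH) (e : rel V)
  (g : VH -> V) : Prop :=
  injective g /\ (forall x y, eH x y -> e (g x) (g y)).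

Definition labeling (V : finType) (f : V -> nat) : Prop :=
  injective f /\ (forall v, 1 <= f v <= #|V|) /\
  (forall k, 1 <= k <= #|V| -> exists v, f v = k).

Definition magic_labeling (VH V : finType) (eH : rel VH) (e : rel V)
  (f : V -> nat) (c : nat) : Prop :=
  labeling f /\
  forall g : VH -> V, subgraph_copy eH e g -> \sum_(x : VH) f (g x) = c.

Definition delta (n1 n2 : nat) : nat := if ~~ odd n1 && odd n2 then 1 else 0.

Definition flab (n1 n2 : nat) (v : 'I_n1 * 'I_n2) : nat :=
  let i := (v.1 : nat).+1 in let j := (v.2 : nat).+1 in
  let d := delta n1 n2 in
  if odd i then
    (if odd j then (i - 1) * n2 + j else (n1 - i) * n2 + j + d)
  else
    (if odd j then (n1 - i) * n2 + (n2 + 1 - j + d)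
     else (i - 1) * n2 + (n2 + 1 - j)).

(* Main.v *)
Require Import Defs.
From mathcomp Require Import all_boot zify.

Definition F (n1 n2 a b : nat) : nat :=
  let i := a.+1 in let j := b.+1 in
  let d := delta n1 n2 in
  if odd i then
    (if odd j then (i - 1) * n2 + j else (n1 - i) * n2 + j + d)
  else
    (if odd j then (n1 - i) * n2 + (n2 + 1 - j + d)
     else (i - 1) * n2 + (n2 + 1 - j)).

Definition FK (n1 n2 a b : nat) : nat :=
  if ~~ odd a then (if ~~ odd b then a else n1 - 1 - a)
  else if odd b then a
  else if (~~ odd n1 && odd n2) && (b == 0) then n1 - a else n1 - 1 - a.

Definition FR (n1 n2 a b : nat) : nat :=
  if ~~ odd a then (if ~~ odd b then b else b + delta n1 n2)
  else if odd b then n2 - 1 - b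
  else if (~~ odd n1 && odd n2) then (if b == 0 then 0 else n2 - b) else n2 - 1 - b.

Lemma par (a : nat) : a = (odd a) + (a./2).*2.
Proof. by rewrite odd_double_half. Qed.

Lemma FKR n1 n2 a b : a < n1 -> b < n2 ->
  F n1 n2 a b = (FK n1 n2 a b * n2 + FR n1 n2 a b).+1 /\
  FR n1 n2 a b < n2 /\ FK n1 n2 a b < n1.
Proof.
move=> ha hb; rewrite /F /FK /FR /delta /= !subn1 /=.
have P1 := par n1; have P2 := par n2; have Pa := par a; have Pb := par b.
case: (odd n1) P1 => P1; case: (odd n2) P2 => P2 /=.
all: have [p E1] : exists p, n1 = p + a.+1 by exists (n1 - a.+1); lia.
all: have [q E2] : exists q, n2 = q + b.+1 by exists (n2 - b.+1); lia.
all: case: (odd a) Pa => Pa; case: (odd b) Pb => Pb /=.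
all: try case: eqP => Eb.
all: rewrite ?E1 ?E2.
all: try have -> : p + a.+1 - a.+1 = p by lia.
all: try have -> : p + a.+1 - 1 - a = p by lia.
all: try have -> : p + a.+1 - a = p.+1 by lia.
all: try have -> : q + b.+1 + 1 - b.+1 = q.+1 by lia.
all: try have -> : q + b.+1 - 1 - b = q by lia.
all: try have -> : q + b.+1 - b = q.+1 by lia.
all: try have -> : (p + a.+1).-1 - a = p by lia.
all: try have -> : (q + b.+1).-1 - b = q by lia.
all: try subst b.
all: lia.
Qed.

Lemma uniq_dec n K R K' R' : R < n -> R' < n -> K * n + R = K' * n + R' -> K = K' /\ R = R'.
Proof.
move=> h h' E.
have : (K * n + R) %/ n = (K' * n + R') %/ n by rewrite E.
have n0 : 0 < n by lia.
rewrite !divnMDl // !divn_small // !addn0 => EK; subst; lia.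
Qed.
Lemma square n1 n2 a b : a.+1 < n1 -> b.+1 < n2 ->
  F n1 n2 a b + F n1 n2 a.+1 b + F n1 n2 a b.+1 + F n1 n2 a.+1 b.+1 =
  (if ~~ odd n1 && odd n2 then 2 * (n1 * n2 + 2) else 2 * (n1 * n2 + 1)).
Proof.
move=> ha hb; rewrite /F /delta /= !subn1 /=.
case: (~~ odd n1 && odd n2).
all: have [p ->] : exists p, n1 = p + a.+2 by exists (n1 - a.+2); lia.
all: have [q ->] : exists q, n2 = q + b.+2 by exists (n2 - b.+2); lia.
all: have -> : p + a.+2 - a.+1 = p.+1 by lia.
all: have -> : p + a.+2 - a.+2 = p by lia.
all: have -> : q + b.+2 + 1 - b.+1 = q.+2 by lia.
all: have -> : q + b.+2 + 1 - b.+2 = q.+1 by lia.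
all: case: (odd a); case: (odd b) => /=.
all: time lia.
Qed.
Lemma FKR_inj n1 n2 a b a' b' : a < n1 -> b < n2 -> a' < n1 -> b' < n2 ->
  FK n1 n2 a b = FK n1 n2 a' b' -> FR n1 n2 a b = FR n1 n2 a' b' -> a = a' /\ b = b'.
Proof.
move=> ha hb ha' hb'; rewrite /FK /FR /delta.
have P1 := par n1; have P2 := par n2; have Pa := par a; have Pb := par b.
have Pa' := par a'; have Pb' := par b'.
case: (odd n1) P1 => P1; case: (odd n2) P2 => P2 /=;
case: (odd a) Pa => Pa; case: (odd b) Pb => Pb;
case: (odd a') Pa' => Pa'; case: (odd b') Pb' => Pb' /=;
do ?case: eqP => ?; lia.
Qed.
Lemma adjP x y x' y' : distn x x' + distn y y' = 1 ->
  (x' = x.+1 /\ y' = y) \/ (x = x'.+1 /\ y' = y) \/ (x' = x /\ y' = y.+1) \/ (x' = x /\ y = y'.+1).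
Proof. rewrite /distn; lia. Qed.

Lemma cyc (n1 n2 S : nat) (G : nat -> nat -> nat)
  (Sq : forall a b, a.+1 < n1 -> b.+1 < n2 -> G a b + G a.+1 b + G a b.+1 + G a.+1 b.+1 = S)
  x0 y0 x1 y1 x2 y2 x3 y3 :
  x0 < n1 -> x1 < n1 -> x2 < n1 -> x3 < n1 ->
  y0 < n2 -> y1 < n2 -> y2 < n2 -> y3 < n2 ->
  distn x0 x1 + distn y0 y1 = 1 -> distn x1 x2 + distn y1 y2 = 1 ->
  distn x2 x3 + distn y2 y3 = 1 -> distn x3 x0 + distn y3 y0 = 1 ->
  ~ (x0 = x2 /\ y0 = y2) -> ~ (x1 = x3 /\ y1 = y3) ->
  G x0 y0 + G x1 y1 + G x2 y2 + G x3 y3 = S.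
Proof.
move=> ? ? ? ? ? ? ? ? /adjP A1 /adjP A2 /adjP A3 /adjP A4 N1 N2.
case: A1 => [[? ?]|[[? ?]|[[? ?]|[? ?]]]]; subst;
case: A2 => [[? ?]|[[? ?]|[[? ?]|[? ?]]]]; subst;
case: A3 => [[? ?]|[[? ?]|[[? ?]|[? ?]]]]; subst;
case: A4 => [[? ?]|[[? ?]|[[? ?]|[? ?]]]]; subst;
  first [ exfalso; lia
        | rewrite -(Sq x0 y0); lia | rewrite -(Sq x0 y1); lia
        | rewrite -(Sq x0 y2); lia | rewrite -(Sq x0 y3); lia
        | rewrite -(Sq x1 y0); lia | rewrite -(Sq x1 y1); lia
        | rewrite -(Sq x1 y2); lia | rewrite -(Sq x1 y3); lia
        | rewrite -(Sq x2 y0); lia | rewrite -(Sq x2 y1); lia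
        | rewrite -(Sq x2 y2); lia | rewrite -(Sq x2 y3); lia
        | rewrite -(Sq x3 y0); lia | rewrite -(Sq x3 y1); lia
        | rewrite -(Sq x3 y2); lia | rewrite -(Sq x3 y3); lia ].
Qed.
Theorem lemma3 (n1 n2 : nat) (h2 : 2 <= n2) (h12 : n2 <= n1) :
  magic_labeling Q2_adj (@grid_adj n1 n2) (@flab n1 n2)
    (if ~~ odd n1 && odd n2 then 2 * (n1 * n2 + 2) else 2 * (n1 * n2 + 1)).
Proof.
have fE : forall v : 'I_n1 * 'I_n2, flab v = F n1 n2 v.1 v.2 by [].
have KR : forall v : 'I_n1 * 'I_n2, flab v = (FK n1 n2 v.1 v.2 * n2 + FR n1 n2 v.1 v.2).+1
    /\ FR n1 n2 v.1 v.2 < n2 /\ FK n1 n2 v.1 v.2 < n1.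
  by move=> [a b]; rewrite fE; apply: FKR.
have inj : injective (@flab n1 n2).
  move=> [a b] [a' b'] E.
  have [E1 [r1 k1]] := KR (a,b); have [E2 [r2 k2]] := KR (a',b').
  rewrite E1 E2 in E; case: E => E.
  have [EK ER] := uniq_dec _ _ _ _ _ r1 r2 E.
  have [] := FKR_inj _ _ _ _ _ _ (ltn_ord a) (ltn_ord b) (ltn_ord a') (ltn_ord b') EK ER.
  by move=> /val_inj -> /val_inj ->.
have cardV : #|{: 'I_n1 * 'I_n2}| = n1 * n2 by rewrite card_prod !card_ord.
have rng : forall v : 'I_n1 * 'I_n2, 1 <= flab v <= n1 * n2.
  move=> v; have [E [r k]] := KR v; rewrite E; nia.
split.
  split; first exact: inj.
  split; first by move=> v; rewrite cardV.
  rewrite cardV => k hk.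
  have hlt : forall v : 'I_n1 * 'I_n2, (flab v).-1 < n1 * n2 by move=> v; have := rng v; lia.
  pose g (v : 'I_n1 * 'I_n2) := Ordinal (hlt v) : 'I_(n1*n2).
  have ginj : injective g.
    move=> u v /(congr1 val) /= E; apply: inj; have := rng u; have := rng v; lia.
  have gb : bijective g.
    by apply: (inj_card_bij ginj); rewrite cardV card_ord.
  case: gb => h gh hg.
  have hk' : k.-1 < n1 * n2 by lia.
  exists (h (Ordinal hk')).
  have := congr1 val (hg (Ordinal hk')); rewrite /= => E.
  have := rng (h (Ordinal hk')); lia.
move=> g [ginj gadj].
have -> : \sum_(x : 'I_2 * 'I_2) flab (g x) = \sum_(i < 2) \sum_(j < 2) flab (g (i, j)).
  by rewrite pair_bigA; apply: eq_bigr => -[].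
rewrite !big_ord_recr !big_ord0 /=.
set o0 := widen_ord _ _.
set o1 := ord_max.
have nq : forall u v : 'I_2 * 'I_2, val u.1 <> val v.1 ->
    ~ ((g u).1 = (g v).1 :> nat /\ (g u).2 = (g v).2 :> nat).
  move=> u v uv [e1 e2]; apply: uv.
  have : g u = g v.
    by case: (g u) (g v) e1 e2 => [u1 u2] [w1 w2] /= /val_inj -> /val_inj ->.
  by move/ginj => ->.
have C := @cyc n1 n2 _ _ (square n1 n2) _ _ _ _ _ _ _ _
  (ltn_ord (g (o0,o0)).1) (ltn_ord (g (o0,o1)).1) (ltn_ord (g (o1,o1)).1) (ltn_ord (g (o1,o0)).1)
  (ltn_ord (g (o0,o0)).2) (ltn_ord (g (o0,o1)).2) (ltn_ord (g (o1,o1)).2) (ltn_ord (g (o1,o0)).2)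
  (eqP (gadj (o0,o0) (o0,o1) isT)) (eqP (gadj (o0,o1) (o1,o1) isT))
  (eqP (gadj (o1,o1) (o1,o0) isT)) (eqP (gadj (o1,o0) (o0,o0) isT))
  (nq (o0,o0) (o1,o1) ltac:(by [])) (nq (o0,o1) (o1,o0) ltac:(by [])).
by rewrite !fE -C !add0n addnA addnAC.
Qed.
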